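(* Let $B$ be a catacondensed flat hexagonal complex (equivalently, a catacondensed chemical hexagonal complex). Then $B$ is Kekulean, i.e. the skeleton graph of $B$ has a perfect matching.
   Context: Polygonal complexes are described by schemes. Fix a finite alphabet $A$; each symbol $a\in A$ has two literals $a^+$ and $a^-$, each the inverse of the other. A word is a cyclic sequence of literals and represents an oriented polygon whose sides are labelled by the literals in order; a scheme is a finite list of words and represents the polygonal complex obtained by taking one polygon per word and gluing together all sides that carry the same symbol. The gluing is parallel if the two occurrences have the same exponent and antiparallel otherwise. Two schemes represent the same complex if one is obtained from the other by permuting words, cyclically rotating a word, renaming symbols, inverting all occurrences of one symbol, or reversing a word while inverting all of its literals. The skeleton graph of the complex has the edges (symbols) and the vertices (corners of polygons, after gluing) as its edges and vertices. A scheme/complex is: - connected, if it cannot be split into two nonempty subschemes with no symbol in common; - flat, if each symbol occurs at most twice, i.e. every edge lies in at most two polygons; - hexagonal, if every word has exactly six literals; - catacondensed, if whenever two literals $a,b$ occur consecutively in some word, at least one of the symbols $a,b$ occurs only once in the scheme (geometrically, no vertex belongs to three hexagons, so each vertex lies in at most two hexagonal faces). A catacondensed flat hexagonal complex is a connected, flat, hexagonal, catacondensed scheme. Its skeleton then has maximum degree at most $3$. The complex need not be planar or orientable; for example it may contain untwisted cyclacene or Möbius (twisted) cyclacene rings, and it may determine a surface with boundary of any genus. A complex is Kekulean if its skeleton graph admits a perfect matching (a Kekulé structure). *)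

(* Defs.v *)
From mathcomp Require Import all_boot.
Unset Printing Implicit Defensive.

(* A literal: (symbol, exponent), exponent true = a^+ , false = a^-. *)
Definition literal := (nat * bool)%type.
(* A word: cyclic sequence of literals (listed from a chosen starting point). *)
Definition word := seq literal.
Definition scheme := seq word.

Definition sym_count (S : scheme) (a : nat) : nat :=
  sumn [seq count (fun l : literal => l.1 == a) w | w <- S].

Definition syms (S : scheme) : seq nat := flatten [seq [seq l.1 | l <- w] | w <- S].

(* connected: no splitting of the words into two nonempty subschemes
   without a common symbol. *)
Definition connected_scheme (S : scheme) : Prop :=
  forall m : bitseq, size m = size S ->
    mask m S != [::] -> mask (map negb m) S != [::] ->
    has (fun a => a \in syms (mask (map negb m) S)) (syms (mask m S)).

Definition flat (S : scheme) : Prop := forall a, sym_count S a <= 2.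

Definition hexagonal (S : scheme) : Prop := all (fun w : word => size w == 6) S.

Definition catacondensed (S : scheme) : Prop :=
  forall w, w \in S -> forall i, i < size w ->
    (sym_count S (nth (0, true) w i).1 == 1) ||
    (sym_count S (nth (0, true) w (i.+1 %% size w)).1 == 1).

Definition cata_flat_hex (S : scheme) : Prop :=
  [/\ connected_scheme S, flat S, hexagonal S & catacondensed S].

(* Occurrences (k, i) = i-th literal of the k-th word; corners (k, i) = the
   corner of the k-th polygon at which its i-th side starts (i.e. between
   sides i-1 and i). *)
Definition pos6 (S : scheme) : finType := ('I_(size S) * 'I_6)%type.

Definition lit (S : scheme) (o : pos6 S) : literal :=
  nth (0, true) (nth [::] S o.1) o.2.
Definition sym (S : scheme) (o : pos6 S) : nat := (lit S o).1.

(* Side o of its polygon runs from corner o to corner (next o).  The edge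
   labelled by its symbol runs from tailc o to headc o (reversed if the
   exponent is negative). *)
Definition nextc (S : scheme) (o : pos6 S) : pos6 S := (o.1, ordS o.2).
Definition tailc (S : scheme) (o : pos6 S) : pos6 S :=
  if (lit S o).2 then o else nextc S o.
Definition headc (S : scheme) (o : pos6 S) : pos6 S :=
  if (lit S o).2 then nextc S o else o.

Definition glue (S : scheme) : rel (pos6 S) := fun c d =>
  [exists o : pos6 S, exists o' : pos6 S,
     (sym S o == sym S o') &&
     (((tailc S o == c) && (tailc S o' == d)) || ((headc S o == c) && (headc S o' == d)))].

Definition samev (S : scheme) : rel (pos6 S) := connect (glue S).

Definition incident (S : scheme) (c : pos6 S) (a : nat) : bool :=
  [exists o : pos6 S, (sym S o == a) &&
     (samev S (tailc S o) c || samev S (headc S o) c)].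

Definition is_loop (S : scheme) (a : nat) : bool :=
  [exists o : pos6 S, (sym S o == a) && samev S (tailc S o) (headc S o)].

(* Kekulean: the skeleton graph (vertices = classes of corners, edges = symbols)
   has a perfect matching: a set M of edges, none a loop, such that every
   vertex is incident to exactly one edge of M. *)
Definition kekulean (S : scheme) : Prop :=
  exists M : seq nat,
    [/\ uniq M, {subset M <= syms S}, all (fun a => ~~ is_loop S a) M &
        forall c : pos6 S, count (incident S c) M = 1].

(* Main.v *)
Require Import Defs.
From mathcomp Require Import all_boot zify.
Definition at6 (s : seq nat) i := nth 0 s (i %% 6).
Definition glu s i := at6 s i != 0.
Definition sel_loc (s : seq nat) (i : nat) : bool :=
  let j := i %% 6 in
  if at6 s j == 0 then
    (if glu s (j+5) || glu s (j+1) then (at6 s (j+5) == 1) || (at6 s (j+1) == 1)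
     else ~~ glu s (j+3) && (has (fun x => x != 0) s || ~~ odd j))
  else at6 s j == 3.
Definition parabb (g : seq bool) :=
  (count id g == 2) && has (fun i => nth false g i && nth false g (i+3)) (iota 0 3).
Definition wf (s : seq nat) :=
  [&& all (fun i => ~~ (glu s i && glu s (i+1))) (iota 0 6),
      parabb (map (fun x => x != 0) s) ==> has (fun j => at6 s j == 1) (iota 0 6),
      all (fun i => all (fun i' => (at6 s i == 1) && (at6 s i' == 1) ==> (i == i')) (iota 0 6)) (iota 0 6) &
      ~~ parabb (map (fun x => x != 0) s) ==> all (fun i => at6 s i != 1) (iota 0 6)].
Definition facts (s : seq nat) :=
  all (fun i =>
   [&& (~~ glu s i && ~~ glu s (i+5)) ==> (sel_loc s i (+) sel_loc s (i+5)),
       (at6 s i == 3) ==> [&& sel_loc s i, ~~ sel_loc s (i+5) & ~~ sel_loc s (i+1)],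
       (at6 s i == 1) ==> [&& ~~ sel_loc s i, sel_loc s (i+5) & sel_loc s (i+1)],
       (at6 s i == 2) ==> [&& ~~ sel_loc s i, ~~ sel_loc s (i+5) & ~~ sel_loc s (i+1)] &
       (~~ glu s i && sel_loc s i) ==> ~~ (glu s (i+5) && glu s (i+1))]) (iota 0 6).
Definition U := iota 0 4.
Definition check := all (fun a => all (fun b => all (fun c => all (fun d => all (fun e => all (fun f =>
   let s := [:: a; b; c; d; e; f] in wf s ==> facts s) U) U) U) U) U) U.
Lemma check_ok : check = true. Proof. vm_compute. reflexivity. Qed.

Lemma count_sum (T : Type) (p : pred T) (s : seq T) (x0 : T) :
  count p s = \sum_(i < size s) p (nth x0 s i).
Proof.
rewrite -sum1_count big_mkcond (big_nth x0) big_mkord.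
by apply: eq_bigr => i _; case: (p _).
Qed.

Lemma sumn_sum (T : Type) (f : T -> nat) (s : seq T) (x0 : T) :
  sumn (map f s) = \sum_(k < size s) f (nth x0 s k).
Proof. by rewrite sumnE big_map (big_nth x0) big_mkord. Qed.

Lemma sum_pair (I J : finType) (F : I * J -> nat) :
  \sum_(p : I * J) F p = \sum_(i : I) \sum_(j : J) F (i, j).
Proof. by rewrite pair_big; apply: eq_bigr => -[]. Qed.

Lemma hex_size (S : scheme) k : hexagonal S -> k < size S -> size (nth [::] S k) = 6.
Proof.
move=> /allP H Hk; apply/eqP; apply: H; exact: mem_nth.
Qed.

Lemma sym_count_card (S : scheme) a : hexagonal S ->
  sym_count S a = #|[pred o : pos6 S | sym S o == a]|.
Proof.
move=> Hh.
rewrite -sum1_card big_mkcond /sym_count (sumn_sum _ _ _ [::]) /=.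
rewrite (sum_pair ('I_(size S)) ('I_6)) /=.
apply: eq_bigr => k _.
rewrite (count_sum _ _ _ (0, true)) hex_size //.
Qed.

Definition pcnt (L : seq (nat * nat)) (a : nat) :=
  sumn [seq (q.1 == a) + (q.2 == a) | q <- L].

Definition pickr (q : nat * nat) (c : nat) := (c == q.1) || (c == q.2).

Lemma pcnt_cat L1 L2 a : pcnt (L1 ++ L2) a = pcnt L1 a + pcnt L2 a.
Proof. by rewrite /pcnt map_cat sumn_cat. Qed.

Lemma all2_mem L C c : all2 pickr L C -> c \in C -> 0 < pcnt L c.
Proof.
elim: L C => [|q L IH] [|c' C] //= /andP[Hq H2]; rewrite inE => /orP[/eqP ->|Hc].
  by move: Hq; rewrite /pickr /pcnt /= => /orP[] /eqP ->; rewrite eqxx /=; lia.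
by move: (IH C H2 Hc); rewrite /pcnt /=; lia.
Qed.

Lemma all2_cat_inv L1 L2 C : all2 pickr (L1 ++ L2) C ->
  exists C1 C2, [/\ C = C1 ++ C2, all2 pickr L1 C1 & all2 pickr L2 C2].
Proof.
elim: L1 C => [|q L1 IH] C /=; first by move=> H; exists [::], C.
case: C => [|c C] //= /andP[Hq /IH[C1 [C2 [-> H1 H2]]]].
by exists (c :: C1), C2; rewrite /= Hq H1 H2.
Qed.

Lemma all2_catI (L1 L2 : seq (nat * nat)) C1 C2 :
  all2 pickr L1 C1 -> all2 pickr L2 C2 -> all2 pickr (L1 ++ L2) (C1 ++ C2).
Proof.
elim: L1 C1 => [|q L1 IH] [|c C1] //= /andP[-> H1] H2; exact: IH.
Qed.

Arguments all2_cat_inv {L1 L2 C}.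
Arguments all2_mem {L C c}.

Lemma orient_n n L : size L <= n -> (forall a, pcnt L a <= 2) ->
  exists C, all2 pickr L C && uniq C.
Proof.
elim: n L => [|n IH] [|[x y] L1] //=; try by exists [::].
move=> Hs Hc.
have Hx := Hc x; rewrite /pcnt /= eqxx /= -/(pcnt L1 x) in Hx.
case Hhas: (has (fun q : nat * nat => (q.1 == x) || (q.2 == x)) L1).
- set i := find (fun q : nat * nat => (q.1 == x) || (q.2 == x)) L1.
  have Hi : i < size L1 by rewrite -has_find.
  set q := nth (0, 0) L1 i.
  have Hq : (q.1 == x) || (q.2 == x) by apply: (nth_find (0,0) Hhas).
  set z := if q.1 == x then q.2 else q.1.
  have Hqz a : (q.1 == a) + (q.2 == a) = (x == a) + (z == a).
    rewrite /z; case: ifP => [/eqP ->|Hn] //.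
    by move: Hq; rewrite Hn /= => /eqP ->; rewrite addnC.
  have HL1 : L1 = take i L1 ++ q :: drop i.+1 L1 by rewrite -drop_nth // cat_take_drop.
  have Hzq : pickr q z by rewrite /pickr /z; case: ifP; rewrite eqxx ?orbT.
  clearbody z q.
  have HcL a : pcnt ((x, y) :: L1) a =
     (x == a) + (y == a) + ((x == a) + (z == a)) + pcnt (take i L1) a + pcnt (drop i.+1 L1) a.
    rewrite {1}HL1 /pcnt /= -/(pcnt _ a) pcnt_cat /pcnt /= -Hqz.
    rewrite -!/(pcnt _ a).
    move: (pcnt (take i L1) a) (pcnt (drop i.+1 L1) a) (q.1 == a) (q.2 == a) => ? ? [] []; lia.
  set R := (y, z) :: take i L1 ++ drop i.+1 L1.
  have HcR a : pcnt R a = (y == a) + (z == a) + pcnt (take i L1) a + pcnt (drop i.+1 L1) a.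
    by rewrite /R /pcnt /= map_cat sumn_cat !addnA.
  have HRx : pcnt R x = 0.
    by move: (Hc x); rewrite HcL HcR eqxx; lia.
  have [|a|C /andP[HC HU]] := IH R.
  + rewrite /R /= size_cat size_take size_drop Hi; move: Hs; rewrite HL1 size_cat /= size_take Hi.
    lia.
  + by move: (Hc a); rewrite HcL HcR; lia.
  case: C HC HU => [|c0 C] //= /andP[Hc0 HC] /andP[Hc0n HU].
  have [CA [CB [HCe HA HB]]] := all2_cat_inv HC.
  have Hxn : x \notin c0 :: C.
    apply/negP => Hm.
    have : all2 pickr R (c0 :: C) by rewrite /R /= Hc0 HC.
    by move=> /all2_mem /(_ Hm); rewrite HRx.
  exists ((if c0 == y then y else x) :: CA ++ (if c0 == y then x else c0) :: CB).
  apply/andP; split.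
  + rewrite {1}HL1 /=; apply/andP; split.
      by rewrite /pickr; case: ifP; rewrite ?eqxx ?orbT.
    apply: all2_catI => //=; rewrite HB andbT /pickr.
    case: ifP => Hc0y; first by rewrite (eq_sym x q.1) (eq_sym x q.2).
    by move: Hc0; rewrite /pickr /= Hc0y /= => /eqP ->.
  + have Hp : perm_eq ((if c0 == y then y else x) :: CA ++ (if c0 == y then x else c0) :: CB)
       (x :: c0 :: C).
      rewrite HCe.
      have -> : (if c0 == y then y else x) :: CA ++ (if c0 == y then x else c0) :: CB =
         ((if c0 == y then y else x) :: CA) ++ [:: (if c0 == y then x else c0)] ++ CB by [].
      rewrite perm_catCA /=.
      case: ifP => [/eqP ->|_]; first by rewrite perm_refl.
      by rewrite (perm_catCA [:: c0] [:: x] (CA ++ CB)) /= perm_refl.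
    rewrite (perm_uniq Hp) /= Hxn /= Hc0n.
    by rewrite HCe in HU *.
- have HL1x : pcnt L1 x = 0.
    apply/eqP; rewrite /pcnt; elim: L1 Hhas {Hc Hx Hs} => [|p P IHP] //= /norP[Hp Hr].
    by move: Hp (IHP (negbTE Hr)) => /norP[/negbTE -> /negbTE ->] /eqP ->.
  have [a|C /andP[HC HU]] := IH L1 Hs.
  + by move: (Hc a); rewrite /pcnt /= -/(pcnt L1 a); lia.
  exists (x :: C); rewrite /= /pickr eqxx HC HU /= andbT.
  by apply/negP => /(all2_mem HC); rewrite HL1x.
Qed.

Lemma local_ok s : size s = 6 -> all (fun x => x < 4) s -> wf s -> facts s.
Proof.
case: s => [|a [|b [|c [|d [|e [|f [|]]]]]]] //= _ /and5P[Ha Hb Hc Hd /andP[He /andP[Hf _]]].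
have := check_ok; rewrite /check.
have mU x : x < 4 -> x \in U by rewrite /U mem_iota.
move=> /allP/(_ a (mU _ Ha)) /allP/(_ b (mU _ Hb)) /allP/(_ c (mU _ Hc)).
move=> /allP/(_ d (mU _ Hd)) /allP/(_ e (mU _ He)) /allP/(_ f (mU _ Hf)).
by move=> /implyP.
Qed.

Definition parachk (g : seq bool) :=
  parabb g ==> [&& find id g < 3, nth false g (find id g) & nth false g (find id g + 3)].

Lemma para_ok g : size g = 6 -> parachk g.
Proof.
by case: g => [|[] [|[] [|[] [|[] [|[] [|[] [|]]]]]]].
Qed.

Definition glued (S : scheme) (o : pos6 S) := sym_count S (sym S o) == 2.
Definition prevc (S : scheme) (o : pos6 S) : pos6 S := (o.1, ord_pred o.2).
Definition partner (S : scheme) (o : pos6 S) : pos6 S :=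
  odflt o [pick o' : pos6 S | (o' != o) && (sym S o' == sym S o)].
Definition touches (S : scheme) (o c : pos6 S) := (c == o) || (c == nextc S o).

Lemma nextc_neq {S : scheme} {o : pos6 S} : nextc S o != o.
Proof.
case: o => k i; rewrite /nextc xpair_eqE eqxx /= -val_eqE /=.
by case: i => [[|[|[|[|[|[|]]]]]]].
Qed.

Lemma prevcK {S : scheme} {c : pos6 S} : nextc S (prevc S c) = c.
Proof. by case: c => k i; rewrite /nextc /prevc /= ord_predK. Qed.

Lemma nextcK {S : scheme} {c : pos6 S} : prevc S (nextc S c) = c.
Proof. by case: c => k i; rewrite /nextc /prevc /= ordSK. Qed.

Lemma touchesE {S : scheme} {o c : pos6 S} : touches S o c = (o == c) || (o == prevc S c).
Proof.
rewrite /touches eq_sym; congr (_ || _); apply/eqP/eqP => [->|->]; by rewrite ?nextcK ?prevcK.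
Qed.

Lemma th_touch {S : scheme} {o : pos6 S} :
  [/\ touches S o (tailc S o), touches S o (headc S o) & tailc S o != headc S o].
Proof.
rewrite /touches /tailc /headc; case: (lit S o).2; rewrite !eqxx ?orbT //.
  by rewrite eq_sym nextc_neq.
by rewrite nextc_neq.
Qed.

Lemma touch_th {S : scheme} {o c : pos6 S} : touches S o c -> (c = tailc S o) \/ (c = headc S o).
Proof.
rewrite /touches /tailc /headc => /orP[] /eqP ->; case: (lit S o).2; by [left|right].
Qed.

Lemma symcard {S : scheme} a : hexagonal S -> flat S ->
  #|[pred o : pos6 S | sym S o == a]| <= 2.
Proof. by move=> Hh Hf; rewrite -sym_count_card. Qed.

Lemma U1 {S : scheme} {o o' : pos6 S} : hexagonal S -> flat S ->
  o != o' -> sym S o' = sym S o -> glued S o.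
Proof.
move=> Hh Hf Hn He; rewrite /glued eqn_leq Hf sym_count_card //.
apply/card_gt1P; exists o, o'; by rewrite !inE He eqxx.
Qed.

Lemma free_uniq {S : scheme} {o o' : pos6 S} : hexagonal S -> flat S ->
  ~~ glued S o -> sym S o' = sym S o -> o' = o.
Proof.
move=> Hh Hf Hg He; apply/eqP; apply: contraNT Hg => Hn; apply: (U1 Hh Hf _ He) => //.
by rewrite eq_sym.
Qed.

Lemma glued_sym {S : scheme} {o o' : pos6 S} : sym S o' = sym S o -> glued S o' = glued S o.
Proof. by rewrite /glued => ->. Qed.

Lemma partner_spec {S : scheme} {o : pos6 S} : hexagonal S -> flat S -> glued S o ->
  partner S o != o /\ sym S (partner S o) = sym S o.
Proof.
move=> Hh Hf Hg; rewrite /partner; case: pickP => [o' /andP[H1 /eqP H2] //|H].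
move: Hg; rewrite /glued sym_count_card // (cardD1 o) inE eqxx.
rewrite (eq_card0 (A := [predD1 _ & o])) //.
Qed.

Lemma partner_uniq {S : scheme} {o o' : pos6 S} : hexagonal S -> flat S -> glued S o ->
  o' != o -> sym S o' = sym S o -> o' = partner S o.
Proof.
move=> Hh Hf Hg Hn He; have [Hp1 Hp2] := partner_spec Hh Hf Hg.
apply/eqP; apply: contraT => Hn2.
suff : 2 < #|[pred x : pos6 S | sym S x == sym S o]| by rewrite ltnNge symcard.
apply/card_gt2P; exists o, o', (partner S o); rewrite !inE He Hp2 eqxx; split => //.
by rewrite eq_sym Hn Hn2 Hp1.
Qed.

Lemma partner_glued {S : scheme} {o : pos6 S} : hexagonal S -> flat S -> glued S o ->
  glued S (partner S o).
Proof. move=> Hh Hf Hg; have [_ H] := partner_spec Hh Hf Hg; by rewrite (glued_sym H). Qed.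

Lemma partnerK {S : scheme} {o : pos6 S} : hexagonal S -> flat S -> glued S o ->
  partner S (partner S o) = o.
Proof.
move=> Hh Hf Hg; have [H1 H2] := partner_spec Hh Hf Hg.
symmetry; apply: partner_uniq => //; first exact: partner_glued.
all: by rewrite ?H2 // eq_sym.
Qed.

Lemma G1 {S : scheme} {o : pos6 S} : hexagonal S -> catacondensed S ->
  ~~ (glued S o && glued S (nextc S o)).
Proof.
move=> Hh Hc; case: o => k i.
have Hw : nth [::] S k \in S by apply: mem_nth.
have Hs := hex_size S k Hh (ltn_ord k).
have := Hc _ Hw i; rewrite Hs => /(_ (ltn_ord i)).
rewrite /glued /sym /lit /nextc /=.
by case/orP => /eqP ->; rewrite ?andbF.
Qed.

Definition gcorner (S : scheme) (c : pos6 S) := glued S c || glued S (prevc S c).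
Definition gside (S : scheme) (c : pos6 S) := if glued S c then c else prevc S c.
Definition fside (S : scheme) (c : pos6 S) := if glued S c then prevc S c else c.
Definition corr (S : scheme) (c : pos6 S) :=
  if gcorner S c then
    (if c == tailc S (gside S c) then tailc S (partner S (gside S c))
     else headc S (partner S (gside S c)))
  else c.

Lemma G1p {S : scheme} {c : pos6 S} : hexagonal S -> catacondensed S ->
  glued S (prevc S c) -> glued S c = false.
Proof. by move=> Hh Hc Hg; have := G1 (o := prevc S c) Hh Hc; rewrite prevcK Hg => /negbTE. Qed.

Lemma L_gt {S : scheme} {o c : pos6 S} : hexagonal S -> catacondensed S ->
  glued S o -> touches S o c -> gcorner S c /\ gside S c = o.
Proof.
move=> Hh Hc Hg; rewrite touchesE => /orP[] /eqP E; subst o.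
  by rewrite /gcorner /gside Hg.
by rewrite /gcorner /gside Hg orbT (G1p Hh Hc Hg).
Qed.

Lemma L_gs {S : scheme} {c : pos6 S} : gcorner S c -> glued S (gside S c) /\ touches S (gside S c) c.
Proof.
rewrite /gcorner /gside touchesE; case: ifP => [->|_ /= ->]; by rewrite !eqxx ?orbT.
Qed.

Lemma L_fs {S : scheme} {c : pos6 S} : hexagonal S -> catacondensed S -> gcorner S c ->
  ~~ glued S (fside S c) /\ (fside S c = prevc S (gside S c) \/ fside S c = nextc S (gside S c)).
Proof.
move=> Hh Hc; rewrite /gcorner /fside /gside.
case Hg: (glued S c) => /= Hp.
  split; last by left.
  by apply/negP => Hp'; rewrite (G1p Hh Hc Hp') in Hg.
by split; [rewrite Hg | right; rewrite prevcK].
Qed.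

Lemma L_sides {S : scheme} {x c : pos6 S} : touches S x c -> x = gside S c \/ x = fside S c.
Proof.
rewrite touchesE /gside /fside => /orP[] /eqP ->; case: ifP; by [left|right].
Qed.

Lemma corr_spec {S : scheme} {c : pos6 S} : hexagonal S -> flat S -> catacondensed S ->
  gcorner S c ->
  [/\ gcorner S (corr S c), gside S (corr S c) = partner S (gside S c) & corr S (corr S c) = c].
Proof.
move=> Hh Hf Hc Hgc; have [Hg Ht] := L_gs Hgc.
set g := gside S c in Hg Ht *.
have Hg' := partner_glued Hh Hf Hg.
have Ht' : touches S (partner S g) (corr S c).
  rewrite /corr Hgc -/g; case: ifP => _; by case: (th_touch (o := partner S g)).
have [Hgc' Hgs'] := L_gt Hh Hc Hg' Ht'.
split => //.
rewrite {1}/corr Hgc' Hgs' partnerK //.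
rewrite /corr Hgc -/g.
have [Ec|Hn] := eqVneq c (tailc S g); first by rewrite Ec !eqxx.
have [_ _ Hth] := th_touch (o := partner S g); rewrite eq_sym (negbTE Hth).
by case: (touch_th Ht) => // E; rewrite E eqxx in Hn.
Qed.

Lemma glue_sym {S : scheme} {c d : pos6 S} : glue S c d -> glue S d c.
Proof.
move=> /existsP[o /existsP[o' /andP[Hs Hr]]].
apply/existsP; exists o'; apply/existsP; exists o; rewrite eq_sym Hs /=.
by case/orP: Hr => /andP[-> ->]; rewrite ?orbT.
Qed.

Lemma glue_refl {S : scheme} {c : pos6 S} : glue S c c.
Proof.
apply/existsP; exists c; apply/existsP; exists c; rewrite eqxx /=.
have : touches S c c by rewrite /touches eqxx.
by case/touch_th => <-; rewrite eqxx ?orbT.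
Qed.

Lemma glue_corr {S : scheme} {c : pos6 S} : hexagonal S -> flat S ->
  gcorner S c -> glue S c (corr S c).
Proof.
move=> Hh Hf Hgc; have [Hg Ht] := L_gs Hgc.
apply/existsP; exists (gside S c); apply/existsP; exists (partner S (gside S c)).
have [_ Hs] := partner_spec Hh Hf Hg; rewrite Hs eqxx /=.
rewrite /corr Hgc.
move: (gside S c) Hg Ht => g Hg Ht.
have [Ec|Hn] := eqVneq c (tailc S g); first by subst c; rewrite !eqxx.
case: (touch_th Ht) => E; subst c; first by rewrite eqxx in Hn.
apply/orP; right; rewrite eqxx /=.
by rewrite ?eqxx.
Qed.

Lemma glue_R {S : scheme} {c e : pos6 S} : hexagonal S -> flat S -> catacondensed S ->
  glue S c e -> e = c \/ (gcorner S c /\ e = corr S c).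
Proof.
move=> Hh Hf Hc /existsP[o /existsP[o' /andP[/eqP Hs Hr]]].
case: (o =P o') => [E|Hne].
  by left; subst o'; case/orP: Hr => /andP[/eqP <- /eqP <-].
have Hne' : o' != o by apply/eqP => E; apply: Hne.
have Hg : glued S o by apply: (U1 Hh Hf (o' := o')) => //; rewrite eq_sym.
have Ho' : o' = partner S o by apply: partner_uniq.
right.
have [_ _ Hth] := th_touch (o := o).
case/orP: Hr => /andP[/eqP Ec /eqP Ee].
- have Ht : touches S o c by rewrite -Ec; case: (th_touch (o := o)).
  have [Hgc Hgs] := L_gt Hh Hc Hg Ht.
  by rewrite /corr Hgc Hgs -Ec eqxx -Ho' Ee.
- have Ht : touches S o c by rewrite -Ec; case: (th_touch (o := o)).
  have [Hgc Hgs] := L_gt Hh Hc Hg Ht.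
  rewrite /corr Hgc Hgs -Ec -Ho' Ee; split => //.
  by rewrite eq_sym (negbTE Hth).
Qed.

Definition Rc (S : scheme) (c e : pos6 S) := (e == c) || (gcorner S c && (e == corr S c)).

Lemma Rc_sym {S : scheme} {c e : pos6 S} : hexagonal S -> flat S -> catacondensed S ->
  Rc S c e -> Rc S e c.
Proof.
move=> Hh Hf Hc /orP[/eqP ->|/andP[Hg /eqP ->]]; first by rewrite /Rc eqxx.
have [Hg' _ Hcc] := corr_spec Hh Hf Hc Hg.
by rewrite /Rc Hg' Hcc eqxx orbT.
Qed.

Lemma Rc_trans {S : scheme} {c d e : pos6 S} : hexagonal S -> flat S -> catacondensed S ->
  Rc S c d -> Rc S d e -> Rc S c e.
Proof.
move=> Hh Hf Hc /orP[/eqP ->|/andP[Hg /eqP ->]] //.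
move=> /orP[/eqP ->|/andP[_ /eqP ->]]; first by rewrite /Rc Hg eqxx orbT.
have [_ _ Hcc] := corr_spec Hh Hf Hc Hg.
by rewrite Hcc /Rc eqxx.
Qed.

Lemma samev_Rc {S : scheme} {c e : pos6 S} : hexagonal S -> flat S -> catacondensed S ->
  samev S c e -> Rc S c e.
Proof.
move=> Hh Hf Hc /connectP[p Hp ->]; elim: p c Hp => [|x p IH] c /=.
  by rewrite /Rc eqxx.
move=> /andP[Hg Hp]; apply: (Rc_trans Hh Hf Hc _ (IH x Hp)).
case: (glue_R Hh Hf Hc Hg) => [->|[Hgc ->]]; first by rewrite /Rc eqxx.
by rewrite /Rc Hgc eqxx orbT.
Qed.

Lemma Rc_samev {S : scheme} {c e : pos6 S} : hexagonal S -> flat S ->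
  Rc S c e -> samev S c e.
Proof.
move=> Hh Hf /orP[/eqP ->|/andP[Hg /eqP ->]]; first exact: connect0.
by apply: connect1; apply: glue_corr.
Qed.

Lemma inc_elim {S : scheme} {c : pos6 S} b : hexagonal S -> flat S -> catacondensed S ->
  incident S c b -> exists x e, [/\ sym S x = b, touches S x e & Rc S c e].
Proof.
move=> Hh Hf Hc /existsP[o /andP[/eqP Hs Hr]].
have [Ht1 Ht2 _] := th_touch (o := o).
case/orP: Hr => /(samev_Rc Hh Hf Hc) /(Rc_sym Hh Hf Hc) H.
  by exists o, (tailc S o).
by exists o, (headc S o).
Qed.

Lemma inc_intro {S : scheme} {c e x : pos6 S} : hexagonal S -> flat S -> catacondensed S ->
  touches S x e -> Rc S c e -> incident S c (sym S x).
Proof.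
move=> Hh Hf Hc Ht /(Rc_sym Hh Hf Hc) /(Rc_samev Hh Hf) H.
apply/existsP; exists x; rewrite eqxx /=.
by case: (touch_th Ht) => <-; rewrite H ?orbT.
Qed.

Definition gpat (S : scheme) (k : 'I_(size S)) := mkseq (fun i => glued S (k, inord i)) 6.
Definition para (S : scheme) k := parabb (gpat S k).
Definition pk (S : scheme) k : 'I_6 := inord (find id (gpat S k)).
Definition qk (S : scheme) k : 'I_6 := inord (find id (gpat S k) + 3).
Definition PW (S : scheme) := [seq k <- enum 'I_(size S) | para S k].
Definition PL (S : scheme) := [seq (sym S (k, pk S k), sym S (k, qk S k)) | k <- PW S].
Definition jk (S : scheme) (C : seq nat) k : 'I_6 :=
  if nth 0 C (index k (PW S)) == sym S (k, pk S k) then pk S k else qk S k.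
Definition out (S : scheme) C (o : pos6 S) := para S o.1 && (o.2 == jk S C o.1).
Definition st (S : scheme) C (o : pos6 S) : nat :=
  if ~~ glued S o then 0 else if out S C o then 1 else if out S C (partner S o) then 2 else 3.
Definition cfg (S : scheme) C (k : 'I_(size S)) := mkseq (fun i => st S C (k, inord i)) 6.
Definition sel (S : scheme) C (o : pos6 S) := sel_loc (cfg S C o.1) o.2.
Definition Msel (S : scheme) C := undup [seq sym S o | o <- enum (pos6 S) & sel S C o].

Lemma at_cfg (S : scheme) C k j : at6 (cfg S C k) j = st S C (k, inord (j %% 6)).
Proof. by rewrite /at6 /cfg nth_mkseq // ltn_pmod. Qed.

Lemma glu_cfg (S : scheme) C k j : glu (cfg S C k) j = glued S (k, inord (j %% 6)).
Proof. by rewrite /glu at_cfg /st; case: (glued _ _) => //=; case: ifP => //; case: ifP. Qed.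

Lemma sel_cfg (S : scheme) C k j : sel_loc (cfg S C k) j = sel S C (k, inord (j %% 6)).
Proof. by rewrite /sel /= inordK ?ltn_pmod // /sel_loc modn_mod. Qed.

Lemma posE (S : scheme) (o : pos6 S) : o = (o.1, inord (o.2 %% 6)).
Proof. by case: o => k i /=; rewrite modn_small // inord_val. Qed.

Lemma nextE (S : scheme) (o : pos6 S) : nextc S o = (o.1, inord ((o.2 + 1) %% 6)).
Proof. by case: o => k i; rewrite /nextc /=; congr (_, _); apply: val_inj; rewrite /= inordK ?ltn_pmod // addn1. Qed.

Lemma prevE (S : scheme) (o : pos6 S) : prevc S o = (o.1, inord ((o.2 + 5) %% 6)).
Proof. by case: o => k i; rewrite /prevc /=; congr (_, _); apply: val_inj; rewrite /= inordK ?ltn_pmod // addnS. Qed.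

Lemma facts_o (S : scheme) C (o : pos6 S) : wf (cfg S C o.1) ->
 [/\ (~~ glued S o && ~~ glued S (prevc S o)) ==> (sel S C o (+) sel S C (prevc S o)),
     (st S C o == 3) ==> [&& sel S C o, ~~ sel S C (prevc S o) & ~~ sel S C (nextc S o)],
     (st S C o == 1) ==> [&& ~~ sel S C o, sel S C (prevc S o) & sel S C (nextc S o)],
     (st S C o == 2) ==> [&& ~~ sel S C o, ~~ sel S C (prevc S o) & ~~ sel S C (nextc S o)] &
     (~~ glued S o && sel S C o) ==> ~~ (glued S (prevc S o) && glued S (nextc S o))].
Proof.
move=> Hwf.
have Hs : size (cfg S C o.1) = 6 by rewrite size_mkseq.
have Ha : all (fun x => x < 4) (cfg S C o.1).
  apply/allP => x /mapP[i _ ->]; rewrite /st; case: (glued _ _) => //=; case: ifP => //; by case: ifP.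
have := local_ok _ Hs Ha Hwf; rewrite /facts => /allP /(_ o.2).
rewrite mem_iota /= => /(_ (ltn_ord _)) /and5P[H1 H2 H3 H4 H5].
move: H1 H2 H3 H4 H5; rewrite !glu_cfg !sel_cfg !at_cfg -posE -nextE -prevE.
by move=> -> -> -> -> ->.
Qed.

Lemma gpat_nth (S : scheme) k i : i < 6 -> nth false (gpat S k) i = glued S (k, inord i).
Proof. by move=> Hi; rewrite /gpat nth_mkseq. Qed.

Lemma para_pq (S : scheme) k : para S k ->
  [/\ find id (gpat S k) < 3, glued S (k, pk S k) & glued S (k, qk S k)].
Proof.
move=> Hp; have := para_ok (gpat S k) (size_mkseq _ _).
rewrite /parachk -/(para S k) Hp implyTb => /and3P[H1 H2 H3]; split => //.
  by rewrite /pk -gpat_nth //; lia.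
by rewrite /qk -gpat_nth //; lia.
Qed.

Lemma pq_val (S : scheme) k : para S k ->
  nat_of_ord (pk S k) = find id (gpat S k) /\ nat_of_ord (qk S k) = find id (gpat S k) + 3.
Proof.
move=> /para_pq[H _ _]; rewrite /pk /qk !inordK //; lia.
Qed.

Lemma jk_glued (S : scheme) C k : para S k -> glued S (k, jk S C k).
Proof. by move=> /para_pq[_ H1 H2]; rewrite /jk; case: ifP. Qed.

Lemma out_glued (S : scheme) C (o : pos6 S) : out S C o -> glued S o.
Proof. by case: o => k i /andP[Hp /eqP /= ->]; apply: jk_glued. Qed.

Lemma st1 (S : scheme) C (o : pos6 S) : (st S C o == 1) = out S C o.
Proof.
rewrite /st; case Ho: (out S C o); first by rewrite (out_glued _ _ _ Ho).
by case: (glued S o) => //=; case: ifP.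
Qed.

Lemma all2_nth L C : all2 pickr L C ->
  size L = size C /\ forall i, i < size L -> pickr (nth (0,0) L i) (nth 0 C i).
Proof.
elim: L C => [|q L IH] [|c C] //= /andP[Hq /IH[-> H]]; split => // -[|i] //=.
exact: H.
Qed.

Lemma mem_PW (S : scheme) k : (k \in PW S) = para S k.
Proof. by rewrite mem_filter mem_enum andbT. Qed.

Lemma sym_jk (S : scheme) C k : all2 pickr (PL S) C -> para S k ->
  sym S (k, jk S C k) = nth 0 C (index k (PW S)).
Proof.
move=> /all2_nth[_ H] Hp.
have Hk : k \in PW S by rewrite mem_PW.
have Hi : index k (PW S) < size (PL S) by rewrite size_map index_mem.
have := H _ Hi; rewrite (nth_map k) ?index_mem // nth_index // /pickr /jk /=.
by case: ifP => [/eqP -> //|_ /= /eqP ->].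
Qed.

Lemma out_inj (S : scheme) C (o o' : pos6 S) : all2 pickr (PL S) C -> uniq C ->
  out S C o -> out S C o' -> sym S o = sym S o' -> o = o'.
Proof.
case: o => k i; case: o' => k' i' HC HU /andP[Hp /eqP /= Ei] /andP[Hp' /eqP /= Ei'].
subst i i'; rewrite !sym_jk //.
have [Hs _] := all2_nth _ _ HC.
have [->|Hne] := eqVneq k k'; first by [].
move=> /eqP; rewrite nth_uniq //; last 2 first.
- by rewrite -Hs size_map index_mem mem_PW.
- by rewrite -Hs size_map index_mem mem_PW.
move=> /eqP E; have := congr1 (nth k (PW S)) E; rewrite !nth_index ?mem_PW // => E'.
by rewrite E' eqxx in Hne.
Qed.

Lemma enum_ie n : enum 'I_n = index_enum 'I_n.
Proof. by rewrite enumT /index_enum locked_withE. Qed.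

Lemma sum_sub (T : Type) (r : seq T) (P : pred T) (F G : T -> nat) :
  (forall k, P k -> F k <= G k) -> \sum_(k <- r | P k) F k <= \sum_(k <- r) G k.
Proof.
move=> H; elim: r => [|x r IH]; first by rewrite !big_nil.
rewrite !big_cons; case: ifP => Hx; first by rewrite leq_add // H.
exact: leq_trans IH (leq_addl _ _).
Qed.

Lemma sym_count_sum (S : scheme) a : hexagonal S ->
  sym_count S a = \sum_(k < size S) \sum_(i < 6) (sym S (k, i) == a).
Proof.
move=> Hh; rewrite /sym_count (sumn_sum _ _ _ [::]); apply: eq_bigr => k _.
by rewrite (count_sum _ _ _ (0, true)) hex_size.
Qed.

Lemma pcnt_PL (S : scheme) a : hexagonal S -> flat S -> pcnt (PL S) a <= 2.
Proof.
move=> Hh Hf; apply: leq_trans (Hf a); rewrite sym_count_sum //.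
rewrite /pcnt /PL -map_comp sumnE big_map /PW big_filter enum_ie.
apply: sum_sub => k Hp /=.
have [Hv1 Hv2] := pq_val _ _ Hp.
have Hne : qk S k != pk S k by rewrite -val_eqE /= Hv1 Hv2 -{2}(addn0 (find _ _)) eqn_add2l.
rewrite (bigD1 (pk S k)) //= (bigD1 (qk S k)) //=.
by rewrite addnA leq_addr.
Qed.

Lemma wf_cfg (S : scheme) C k : hexagonal S -> catacondensed S ->
  all2 pickr (PL S) C -> uniq C -> wf (cfg S C k).
Proof.
move=> Hh Hc HC HU.
have Hmap : map (fun x => x != 0) (cfg S C k) = gpat S k.
  rewrite /cfg /gpat /mkseq -map_comp; apply: eq_map => i /=.
  by rewrite /st; case: (glued _ _) => //=; case: ifP => //; case: ifP.
rewrite /wf Hmap -/(para S k); apply/and4P; split.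
- apply/allP => i; rewrite mem_iota => /andP[_ Hi].
  rewrite !glu_cfg (modn_small Hi).
  by have := G1 (o := (k, inord i)) Hh Hc; rewrite nextE /= inordK.
- apply/implyP => Hp; apply/hasP; exists (nat_of_ord (jk S C k)).
    by rewrite mem_iota /=.
  by rewrite at_cfg modn_small // inord_val st1 /out /= Hp eqxx.
- apply/allP => i Hi; apply/allP => i' Hi'; apply/implyP => /andP[].
  rewrite !at_cfg !st1 /out /= => /andP[_ /eqP E1] /andP[_ /eqP E2].
  move: Hi Hi'; rewrite !mem_iota /= => Hi Hi'.
  have := congr1 val E1; have := congr1 val E2; rewrite /= !inordK ?ltn_pmod //.
  by rewrite !modn_small // => -> ->.
- apply/implyP => Hnp; apply/allP => i _.
  by rewrite at_cfg st1 /out /= (negbTE Hnp).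
Qed.

Lemma sel_glued (S : scheme) C (o : pos6 S) : glued S o -> sel S C o = (st S C o == 3).
Proof.
move=> Hg; have Ha : at6 (cfg S C o.1) (o.2 %% 6) = st S C o by rewrite at_cfg modn_mod -posE.
have Hn : st S C o != 0 by rewrite /st Hg /=; case: ifP => //; case: ifP.
by rewrite /sel /sel_loc Ha (negbTE Hn).
Qed.

Lemma st3 (S : scheme) C (o : pos6 S) : glued S o ->
  (st S C o == 3) = ~~ out S C o && ~~ out S C (partner S o).
Proof. by move=> Hg; rewrite /st Hg /=; case: (out _ _ o); case: (out _ _ (partner S o)). Qed.

Lemma sel_sym (S : scheme) C (x y : pos6 S) : hexagonal S -> flat S ->
  sym S x = sym S y -> sel S C y -> sel S C x.
Proof.
move=> Hh Hf E Hsy; case Hg: (glued S x).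
  have Hgy : glued S y by rewrite (glued_sym (esym E)).
  have [Exy|Hne] := eqVneq y x; first by rewrite -Exy.
  have Hy := partner_uniq Hh Hf Hg Hne (esym E).
  by move: Hsy; rewrite !sel_glued // !st3 // Hy partnerK // andbC.
by move: Hsy; rewrite (free_uniq Hh Hf (negbT Hg) (esym E)).
Qed.

Lemma lab (S : scheme) C (g : pos6 S) : hexagonal S -> flat S ->
  all2 pickr (PL S) C -> uniq C -> glued S g ->
  [/\ st S C g == 1 -> st S C (partner S g) = 2,
      st S C g == 2 -> st S C (partner S g) = 1 &
      st S C g == 3 -> st S C (partner S g) = 3].
Proof.
move=> Hh Hf HC HU Hg.
have Hg' := partner_glued Hh Hf Hg; have [Hne Hs] := partner_spec Hh Hf Hg.
split.
- rewrite st1 => Ho; rewrite /st Hg' /= partnerK // Ho.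
  case: ifP => // Ho'.
  have := out_inj _ _ _ _ HC HU Ho Ho' (esym Hs) => E.
  by rewrite -E eqxx in Hne.
- rewrite {1}/st Hg /=; case Hog: (out S C g) => //=.
  case Hop: (out S C (partner S g)) => //= _.
  by apply/eqP; rewrite st1.
- by rewrite st3 // => /andP[H1 H2]; apply/eqP; rewrite st3 // partnerK // H1 H2.
Qed.

Lemma st_cases (S : scheme) C (g : pos6 S) : glued S g ->
  [\/ st S C g = 1, st S C g = 2 | st S C g = 3].
Proof.
move=> Hg; rewrite /st Hg /=; case: ifP => _; first by constructor 1.
by case: ifP => _; [constructor 2 | constructor 3].
Qed.

Lemma inM (S : scheme) C (x : pos6 S) : sel S C x -> sym S x \in Msel S C.
Proof. by move=> Hx; rewrite mem_undup; apply: map_f; rewrite mem_filter Hx mem_enum. Qed.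

Lemma Mel (S : scheme) C b : b \in Msel S C -> exists y, sel S C y /\ sym S y = b.
Proof.
rewrite mem_undup => /mapP[y]; rewrite mem_filter => /andP[Hy _] ->.
by exists y.
Qed.

Lemma fs_touch (S : scheme) (c : pos6 S) : touches S (fside S c) c.
Proof. by rewrite touchesE /fside; case: ifP; rewrite eqxx ?orbT. Qed.

Lemma corner_ok (S : scheme) C (c : pos6 S) : hexagonal S -> flat S -> catacondensed S ->
  all2 pickr (PL S) C -> uniq C -> (forall k, wf (cfg S C k)) ->
  exists a, [/\ a \in Msel S C, incident S c a &
                forall b, b \in Msel S C -> incident S c b -> b = a].
Proof.
move=> Hh Hf Hc HC HU Hwf.
have Hfo o := facts_o S C o (Hwf o.1).
have Rcc : Rc S c c by rewrite /Rc eqxx.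
case Hgc: (gcorner S c).
- have [Hg Ht] := L_gs Hgc.
  have [Hfr Hfs] := L_fs Hh Hc Hgc.
  have [Hgc' Hgs' Hcc] := corr_spec Hh Hf Hc Hgc.
  have [Hfr' Hfs'] := L_fs Hh Hc Hgc'; rewrite Hgs' in Hfs'.
  have Rcc' : Rc S c (corr S c) by rewrite /Rc Hgc eqxx orbT.
  have key : forall b, b \in Msel S C -> incident S c b -> exists x,
      [/\ sel S C x, sym S x = b &
          [\/ x = gside S c, x = fside S c, x = partner S (gside S c) | x = fside S (corr S c)]].
    move=> b /Mel[y [Hy Hyb]] /(inc_elim b Hh Hf Hc)[x [e [Hxb Hxe HR]]].
    have Hsx : sel S C x by apply: (sel_sym S C x y Hh Hf _ Hy); rewrite Hxb Hyb.
    exists x; split => //.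
    move: HR; rewrite /Rc => /orP[/eqP E|/andP[_ /eqP E]]; subst e.
      by case: (L_sides Hxe) => ->; [constructor 1|constructor 2].
    by case: (L_sides Hxe) => ->; [rewrite Hgs'; constructor 3|constructor 4].
  move: Hg Ht Hfs Hgs' Hfs' key; set g := gside S c => Hg Ht Hfs Hgs' Hfs' key.
  have [L1 L2 L3] := lab S C g Hh Hf HC HU Hg.
  have [_ F2 F3 F4 _] := Hfo g.
  have [_ G2 G3 G4 _] := Hfo (partner S g).
  have [_ Hsym] := partner_spec Hh Hf Hg.
  case: (st_cases S C g Hg) => Hst.
  + move: F3; rewrite Hst eqxx => /and3P[Hn1 Hp1 Hq1].
    move: G4; rewrite L1 ?Hst // eqxx => /and3P[Hn2 Hp2 Hq2].
    have Hsf : sel S C (fside S c) by case: Hfs => ->.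
    exists (sym S (fside S c)); split.
    * exact: inM.
    * exact: inc_intro Hh Hf Hc (fs_touch S c) Rcc.
    * move=> b Hb Hi; have [x [Hx <- Hcs]] := key b Hb Hi.
      case: Hcs => E; subst x => //; first by move: Hn1; rewrite Hx.
        by move: Hn2; rewrite Hx.
      by case: Hfs' => E; move: Hx; rewrite E ?(negbTE Hp2) ?(negbTE Hq2).
  + move: F4; rewrite Hst eqxx => /and3P[Hn1 Hp1 Hq1].
    move: G3; rewrite L2 ?Hst // eqxx => /and3P[Hn2 Hp2 Hq2].
    have Hsf : sel S C (fside S (corr S c)) by case: Hfs' => ->.
    exists (sym S (fside S (corr S c))); split.
    * exact: inM.
    * exact: inc_intro Hh Hf Hc (fs_touch S (corr S c)) Rcc'.
    * move=> b Hb Hi; have [x [Hx <- Hcs]] := key b Hb Hi.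
      case: Hcs => E; subst x => //; first by move: Hn1; rewrite Hx.
        by case: Hfs => E; move: Hx; rewrite E ?(negbTE Hp1) ?(negbTE Hq1).
      by move: Hn2; rewrite Hx.
  + move: F2; rewrite Hst eqxx => /and3P[Hn1 Hp1 Hq1].
    move: G2; rewrite L3 ?Hst // eqxx => /and3P[Hn2 Hp2 Hq2].
    exists (sym S g); split.
    * exact: inM.
    * exact: inc_intro Hh Hf Hc Ht Rcc.
    * move=> b Hb Hi; have [x [Hx <- Hcs]] := key b Hb Hi.
      case: Hcs => E; subst x; rewrite ?Hsym //.
      - by case: Hfs => E; move: Hx; rewrite E ?(negbTE Hp1) ?(negbTE Hq1).
      - by case: Hfs' => E; move: Hx; rewrite E ?(negbTE Hp2) ?(negbTE Hq2).
- have [F1 _ _ _ _] := Hfo c.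
  move: Hgc; rewrite /gcorner => /negbT; rewrite negb_or => Hfr.
  move: F1; rewrite Hfr /= => Hx.
  set x0 := if sel S C c then c else prevc S c.
  have Hs0 : sel S C x0 by rewrite /x0; move: Hx; case: ifP => //= _; rewrite negbK.
  have Ht0 : touches S x0 c by rewrite touchesE /x0; case: ifP; rewrite eqxx ?orbT.
  exists (sym S x0); split.
  + exact: inM.
  + exact: inc_intro Hh Hf Hc Ht0 Rcc.
  + move=> b /Mel[y [Hy Hyb]] /(inc_elim b Hh Hf Hc)[x [e [Hxb Hxe HR]]].
    have Hsx : sel S C x by apply: (sel_sym S C x y Hh Hf _ Hy); rewrite Hxb Hyb.
    move: HR; rewrite /Rc /gcorner (negbTE (proj1 (andP Hfr))) (negbTE (proj2 (andP Hfr))) /= orbF.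
    move=> /eqP E; rewrite E in Hxe; rewrite -Hxb; congr (sym S _).
    move: Hxe; rewrite touchesE /x0 => /orP[] /eqP E'; subst x.
      by rewrite Hsx.
    by move: Hx; rewrite Hsx; case: ifP.
Qed.

Lemma noloop (S : scheme) C (y : pos6 S) : hexagonal S -> flat S -> catacondensed S ->
  (forall k, wf (cfg S C k)) -> sel S C y -> ~~ is_loop S (sym S y).
Proof.
move=> Hh Hf Hc Hwf Hy; apply/negP => /existsP[o /andP[/eqP Hs Hl]].
have Hso : sel S C o by apply: (sel_sym S C o y Hh Hf Hs Hy).
have [Ht1 Ht2 Hth] := th_touch (o := o).
move: Hl => /(samev_Rc Hh Hf Hc) /orP[/eqP E|/andP[Hgc /eqP E]].
  by rewrite E eqxx in Hth.
have [Hgc' Hgs' _] := corr_spec Hh Hf Hc Hgc.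
case Hg: (glued S o).
  have [_ Hgs] := L_gt Hh Hc Hg Ht1.
  have [_ Hgs2] := L_gt Hh Hc Hg Ht2.
  rewrite -E Hgs2 Hgs in Hgs'.
  have [Hne _] := partner_spec Hh Hf Hg.
  by rewrite -Hgs' eqxx in Hne.
have [_ _ _ _ F5] := facts_o S C o (Hwf o.1).
move: F5; rewrite Hg Hso /=.
have H2 : gcorner S (headc S o) by rewrite E.
move: Hgc H2; rewrite /tailc /headc.
by case: (lit S o).2; rewrite /gcorner nextcK Hg /= ?orbF => -> ->.
Qed.

Lemma sym_in_syms (S : scheme) (y : pos6 S) : hexagonal S -> sym S y \in syms S.
Proof.
move=> Hh; rewrite /syms; apply/flatten_mapP; exists (nth [::] S y.1).
  exact: mem_nth.
apply: map_f; apply: mem_nth; by rewrite hex_size.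
Qed.

Lemma count_one (s : seq nat) (p : pred nat) a : uniq s -> a \in s -> p a ->
  (forall b, b \in s -> p b -> b = a) -> count p s = 1.
Proof.
move=> Hu Ha Hp H.
rewrite (@eq_in_count _ p (pred1 a)); first by rewrite count_uniq_mem // Ha.
move=> b Hb /=; apply/idP/eqP => [Hpb|->] //; exact: H.
Qed.

Theorem mainTheorem1 (S : scheme) : cata_flat_hex S -> kekulean S.
Proof.
move=> [Hcon Hf Hh Hc].
have [C /andP[HC HU]] := orient_n (size (PL S)) (PL S) (leqnn _) (fun a => pcnt_PL S a Hh Hf).
have Hwf k := wf_cfg S C k Hh Hc HC HU.
exists (Msel S C); split.
- exact: undup_uniq.
- by move=> b /Mel[y [_ <-]]; apply: sym_in_syms.
- by apply/allP => b /Mel[y [Hy <-]]; apply: noloop.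
- move=> c; have [a [Ha Hi Hu]] := corner_ok S C c Hh Hf Hc HC HU Hwf.
  exact: count_one (undup_uniq _) Ha Hi Hu.
Qed.
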